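(* With the notation below, there are no $t,u\in N'$ such that $\langle N',*',t,u\rangle$ is a partial combinatory algebra.
   Context: Let $X$ be an infinite set of variables and $T(X)$ the set of terms built from variables in $X$ and two constant symbols $s,k$ by a binary application (juxtaposition, associating to the left). Let CL be the term rewriting system with rules $sxyz\to xz(yz)$ and $kxy\to x$; CL is confluent, so every term has at most one normal form. Let $N$ be the set of CL-normal forms, and for $m,n\in N$ let $m*n$ be the normal form of $mn$ if it exists, undefined otherwise. Let $i:=skk$, $\omega:=sii$, $d:=s(k\omega)(k\omega)$. Let $\mathrm{Var}(n)$ be the set of variables of a term $n$, $L:=\{n\in N\mid n*x\text{ is defined for } x\in X\setminus\mathrm{Var}(n)\}$, $N':=L\cup\{d\}$, and let $m*'n$ be $m*n$ if this is defined and lies in $N'$, undefined otherwise. A partial combinatory algebra is a set $A$ with a partial binary operation and elements $S,K\in A$ such that for all $x,y,z\in A$: $Sxy$ is defined, $Sxyz\simeq xz(yz)$, and $Kxy$ is defined and equals $x$; here products associate to the left, a compound product is defined only if all its sub-products are defined, and $\simeq$ means: if either side is defined then both are defined and equal. *)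

(* Defs.v *)
From Stdlib Require Import Relations.

Set Implicit Arguments.

Section CL.
Variable X : Type.

Inductive term : Type :=
| Var : X -> term
| Sc : term
| Kc : term
| App : term -> term -> term.

Inductive red1 : term -> term -> Prop :=
| red1_S : forall x y z, red1 (App (App (App Sc x) y) z) (App (App x z) (App y z))
| red1_K : forall x y, red1 (App (App Kc x) y) x
| red1_appL : forall t t' u, red1 t t' -> red1 (App t u) (App t' u)
| red1_appR : forall t u u', red1 u u' -> red1 (App t u) (App t u').

Definition red : term -> term -> Prop := clos_refl_trans term red1.

Definition normal (t : term) : Prop := forall t', ~ red1 t t'.

(** [nf t n]: n is the normal form of t (unique by confluence). *)
Definition nf (t n : term) : Prop := red t n /\ normal n.

Definition inN (n : term) : Prop := normal n.

Definition appN (m n r : term) : Prop := inN m /\ inN n /\ nf (App m n) r.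

Fixpoint occurs (x : X) (t : term) : Prop :=
  match t with
  | Var y => x = y
  | Sc => False
  | Kc => False
  | App t1 t2 => occurs x t1 \/ occurs x t2
  end.

Definition i_t : term := App (App Sc Kc) Kc.
Definition omega_t : term := App (App Sc i_t) i_t.
Definition d_t : term := App (App Sc (App Kc omega_t)) (App Kc omega_t).

Definition inL (n : term) : Prop :=
  inN n /\ forall x : X, ~ occurs x n -> exists r, appN n (Var x) r.

Definition inN' (n : term) : Prop := inL n \/ n = d_t.

Definition appN' (m n r : term) : Prop := inN' m /\ inN' n /\ appN m n r /\ inN' r.

End CL.

(** Partial combinatory algebra on a carrier A ⊆ T with a partial binary
    operation given as a relation [op a b c] ("a·b is defined and equals c").
    Compound products are defined iff all sub-products are; with a
    functional [op], "e evaluates to v" is expressed existentially. *)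
Definition is_pca {T : Type} (A : T -> Prop) (op : T -> T -> T -> Prop) (S K : T) : Prop :=
  (forall a b c, op a b c -> A a /\ A b /\ A c) /\
  (forall a b c c', op a b c -> op a b c' -> c = c') /\
  A S /\ A K /\
  forall x y z, A x -> A y -> A z ->
    (exists sx sxy, op S x sx /\ op sx y sxy) /\
    (forall v, (exists sx sxy, op S x sx /\ op sx y sxy /\ op sxy z v) <->
               (exists xz yz, op x z xz /\ op y z yz /\ op xz yz v)) /\
    (exists kx, op K x kx /\ op kx y x).

Definition infinite_type (X : Type) : Prop := exists f : nat -> X, forall m n, f m = f n -> m = n.

(* Main.v *)
Require Import Defs.
From Stdlib Require Import Relations Lia ClassicalEpsilon Classical.

Definition step_app {X} (a b : term X) (sa sb : option (term X)) : option (term X) :=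
  match a with
  | App (App (Sc _) x) y => Some (App (App x b) (App y b))
  | App (Kc _) x => Some x
  | _ => match sa with
         | Some a' => Some (App a' b)
         | None => match sb with Some b' => Some (App a b') | None => None end
         end
  end.

Fixpoint step {X} (t : term X) : option (term X) :=
  match t with
  | App a b => step_app a b (step a) (step b)
  | _ => None
  end.

Fixpoint iter {X} (n : nat) (t : term X) : term X :=
  match n with
  | 0 => t
  | S n => match step t with Some t' => iter n t' | None => t end
  end.

Lemma step_app_sound {X} (a b : term X) sa sb r :
  (forall a', sa = Some a' -> red1 a a') -> (forall b', sb = Some b' -> red1 b b') ->
  step_app a b sa sb = Some r -> red1 (App a b) r.
Proof.
  intros Ha Hb H.
  destruct a as [v| | |a1 a2]; try destruct a1 as [v1| | |a11 a12]; try destruct a11;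
  simpl in H;
  try (injection H; intros; subst; first [apply red1_S | apply red1_K]; fail).
  all: destruct sa as [a'|]; [injection H; intros; subst; apply red1_appL; auto
     | destruct sb as [b'|]; [injection H; intros; subst; apply red1_appR; auto | discriminate]].
Qed.

Lemma step_sound {X} (t : term X) : forall r, step t = Some r -> red1 t r.
Proof.
  induction t; simpl; intros r H; try discriminate.
  eapply step_app_sound; eauto.
Qed.

Lemma step_app_none {X} (a b : term X) sa sb :
  step_app a b sa sb = None -> sa = None /\ sb = None.
Proof.
  intros H.
  destruct a as [v| | |a1 a2]; try destruct a1 as [v1| | |a11 a12]; try destruct a11;
  simpl in H; try discriminate;
  destruct sa; try discriminate; destruct sb; try discriminate; auto.
Qed.

Lemma step_none_normal {X} (t : term X) : step t = None -> normal t.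
Proof.
  intros H t' R. revert H. induction R; simpl; intros H; try discriminate.
  all: apply step_app_none in H; destruct H; auto.
Qed.

Lemma red_iter {X} n (t : term X) : red t (iter n t).
Proof.
  revert t; induction n; intros t; simpl.
  - apply rt_refl.
  - destruct (step t) eqn:E.
    + eapply rt_trans; [apply rt_step; apply step_sound; exact E| apply IHn].
    + apply rt_refl.
Qed.

Lemma red_by {X} n (t u : term X) : iter n t = u -> red t u.
Proof. intros <-; apply red_iter. Qed.

Lemma red_appL {X} (t t' u : term X) : red t t' -> red (App t u) (App t' u).
Proof. induction 1; [apply rt_step; constructor; auto | apply rt_refl | eapply rt_trans; eauto]. Qed.
Lemma red_appR {X} (t u u' : term X) : red u u' -> red (App t u) (App t u').
Proof. induction 1; [apply rt_step; constructor; auto | apply rt_refl | eapply rt_trans; eauto]. Qed.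
Lemma red_app {X} (t t' u u' : term X) : red t t' -> red u u' -> red (App t u) (App t' u').
Proof. intros; eapply rt_trans; [apply red_appL|apply red_appR]; eauto. Qed.

Inductive par {X} : term X -> term X -> Prop :=
| par_var : forall x, par (Var x) (Var x)
| par_s : par (Sc X) (Sc X)
| par_k : par (Kc X) (Kc X)
| par_app : forall t t' u u', par t t' -> par u u' -> par (App t u) (App t' u')
| par_S : forall x x' y y' z z', par x x' -> par y y' -> par z z' ->
    par (App (App (App (Sc X) x) y) z) (App (App x' z') (App y' z'))
| par_K : forall x x' y, par x x' -> par (App (App (Kc X) x) y) x'.

Lemma par_refl {X} (t : term X) : par t t.
Proof. induction t; constructor; auto. Qed.

Lemma red1_par {X} (t u : term X) : red1 t u -> par t u.
Proof. induction 1; [apply par_S|apply par_K|apply par_app|apply par_app]; auto using par_refl. Qed.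

Lemma par_red {X} (t u : term X) : par t u -> red t u.
Proof.
  induction 1; [apply rt_refl|apply rt_refl|apply rt_refl|apply red_app; auto| |].
  - apply rt_trans with (y := App (App (App (Sc X) x') y') z').
    + apply red_app; auto. apply red_app; auto. apply red_app; auto. apply rt_refl.
    + apply rt_step; apply red1_S.
  - eapply rt_trans; [apply rt_step; constructor|]; auto.
Qed.

Fixpoint cd {X} (t : term X) : term X :=
  match t with
  | App (App (Kc _) x) _ => cd x
  | App (App (App (Sc _) x) y) z => App (App (cd x) (cd z)) (App (cd y) (cd z))
  | App a b => App (cd a) (cd b)
  | _ => t
  end.

Lemma par_Sc_inv {X} (t : term X) : par (Sc X) t -> t = Sc X.
Proof. inversion 1; auto. Qed.
Lemma par_Kc_inv {X} (t : term X) : par (Kc X) t -> t = Kc X.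
Proof. inversion 1; auto. Qed.
Lemma par_appK_inv {X} (a t : term X) : par (App (Kc X) a) t -> exists a', t = App (Kc X) a' /\ par a a'.
Proof. inversion 1; subst. apply par_Kc_inv in H2; subst; eauto. Qed.
Lemma par_appS_inv {X} (a t : term X) : par (App (Sc X) a) t -> exists a', t = App (Sc X) a' /\ par a a'.
Proof. inversion 1; subst. apply par_Sc_inv in H2; subst; eauto. Qed.
Lemma par_appSS_inv {X} (a b t : term X) : par (App (App (Sc X) a) b) t ->
  exists a' b', t = App (App (Sc X) a') b' /\ par a a' /\ par b b'.
Proof. inversion 1; subst. apply par_appS_inv in H2. destruct H2 as [a' [-> Ha]]; eauto. Qed.

Lemma par_cd {X} (t t' : term X) : par t t' -> par t' (cd t).
Proof.
  induction 1; [constructor|constructor|constructor| |simpl; apply par_app; apply par_app; auto|simpl; auto].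
  destruct t as [v| | |a1 a2]; simpl in *; try (apply par_app; auto; fail).
  destruct a1 as [v| | |a11 a12]; simpl in *; try (apply par_app; auto; fail).
  - apply par_appK_inv in H. destruct H as [a' [-> Ha]].
    simpl in IHpar1. inversion IHpar1; subst. apply par_K. auto.
  - destruct a11; simpl in *; try (apply par_app; auto; fail).
    apply par_appSS_inv in H. destruct H as [a' [b' [-> [Ha Hb]]]].
    apply par_appSS_inv in IHpar1. destruct IHpar1 as [a'' [b'' [E [Ha' Hb']]]].
    injection E; intros; subst. apply par_S; auto.
Qed.

Lemma strip {X} (t t2 : term X) : red t t2 -> forall t1, par t t1 -> exists t3, red t1 t3 /\ par t2 t3.
Proof.
  induction 1; intros t1 P.
  - exists (cd x). split; [apply par_red, par_cd; auto | apply par_cd, red1_par; auto].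
  - exists t1; split; [apply rt_refl|auto].
  - destruct (IHclos_refl_trans1 _ P) as [t3 [R3 P3]].
    destruct (IHclos_refl_trans2 _ P3) as [t4 [R4 P4]].
    exists t4; split; [eapply rt_trans; eauto|auto].
Qed.

Lemma confluence {X} (t t1 : term X) : red t t1 -> forall t2, red t t2 -> exists t3, red t1 t3 /\ red t2 t3.
Proof.
  induction 1; intros t2 R.
  - destruct (strip _ _ R y (red1_par _ _ H)) as [t3 [R3 P3]].
    exists t3; split; auto using par_red.
  - exists t2; split; [auto|apply rt_refl].
  - destruct (IHclos_refl_trans1 _ R) as [t3 [R3 R3']].
    destruct (IHclos_refl_trans2 _ R3) as [t4 [R4 R4']].
    exists t4; split; [auto|eapply rt_trans; eauto].
Qed.

Lemma red_normal_eq {X} (n t : term X) : normal n -> red n t -> t = n.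
Proof.
  intros Hn R. induction R; auto.
  - exfalso; eapply Hn; eauto.
  - assert (y = x) by auto. subst. auto.
Qed.

Lemma nf_unique {X} (t n1 n2 : term X) : red t n1 -> normal n1 -> red t n2 -> normal n2 -> n1 = n2.
Proof.
  intros R1 N1 R2 N2. destruct (confluence _ _ R1 _ R2) as [t3 [A B]].
  apply red_normal_eq in A; auto. apply red_normal_eq in B; auto. congruence.
Qed.

Lemma red_to_nf {X} (t n t' : term X) : red t n -> normal n -> red t t' -> red t' n.
Proof.
  intros R N R'. destruct (confluence _ _ R _ R') as [t3 [A B]].
  apply red_normal_eq in A; auto. subst; auto.
Qed.

Ltac kill := match goal with H : red1 ?a _ |- _ => exfalso; exact (step_none_normal a eq_refl _ H) end.

Inductive Om {X} : term X -> Prop :=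
| om_w : Om (omega_t X)
| om_i : forall W, Om W -> Om (App (i_t X) W)
| om_k : forall W V, Om W -> Om (App (App (Kc X) W) V).

Lemma Om_red1 {X} (t : term X) : Om t -> forall t', red1 t t' -> Om t'.
Proof.
  induction 1; intros t' R.
  - kill.
  - unfold i_t in R. inversion R; subst.
    + apply om_k; auto.
    + kill.
    + apply om_i; auto.
  - inversion R; subst.
    + auto.
    + inversion H3; subst. inversion H4. apply om_k; auto.
    + apply om_k; auto.
Qed.

Ltac novar := match goal with H : red1 (Var _) _ |- _ => inversion H | H : red1 (Kc _) _ |- _ => inversion H | H : red1 (Sc _) _ |- _ => inversion H end.
Ltac omr := match goal with H : red1 _ ?t |- Om ?t => eapply Om_red1; [|exact H]; assumption end.

Inductive Bad {X} : term X -> Prop :=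
| bad : forall A B, Om A -> Om B -> Bad (App A B).

Lemma Bad_red1 {X} (t t' : term X) : Bad t -> red1 t t' -> Bad t'.
Proof.
  intros Hb R. destruct Hb as [A B HA HB].
  inversion HA; subst.
  - unfold omega_t, i_t in R. inversion R; subst.
    + apply bad; apply om_i; auto.
    + kill.
    + apply bad; [apply om_w| omr].
  - unfold i_t in R. inversion R; subst.
    + apply bad; [omr|auto].
    + apply bad; [auto|omr].
  - inversion R; subst.
    + apply bad; [omr|auto].
    + apply bad; [auto|omr].
Qed.

Inductive DA {X} : term X -> Prop :=
| da_d : forall W, DA (App (d_t X) W)
| da_b : forall t, Bad t -> DA t.

Lemma DA_red1 {X} (t t' : term X) : DA t -> red1 t t' -> DA t'.
Proof.
  intros Hd R. destruct Hd as [W|t Hb].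
  - unfold d_t, omega_t, i_t in R. inversion R; subst.
    + apply da_b. apply bad; apply om_k; apply om_w.
    + kill.
    + apply da_d.
  - apply da_b. eapply Bad_red1; eauto.
Qed.

Inductive Jc {X} (y : X) : term X -> Prop :=
| j_i : Jc y (App (i_t X) (Var y))
| j_k : forall V, Jc y (App (App (Kc X) (Var y)) V)
| j_v : Jc y (Var y).

Inductive Tc {X} (y : X) : term X -> Prop :=
| t_0 : Tc y (App (App (App (Sc X) (i_t X)) (d_t X)) (Var y))
| t_1 : forall J R, Jc y J -> DA R -> Tc y (App J R).

Lemma Tc_red1 {X} (y : X) (t t' : term X) : Tc y t -> red1 t t' -> Tc y t'.
Proof.
  intros Ht R. destruct Ht as [|J Q HJ HQ].
  - unfold i_t, d_t, omega_t in R. inversion R; subst.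
    + apply t_1; [apply j_i| apply da_d].
    + kill.
    + novar.
  - inversion R; subst.
    + inversion HJ; subst. 
    + inversion HJ; subst.
    + apply t_1; auto. inversion HJ; subst.
      * unfold i_t in H2. inversion H2; subst.
        -- apply j_k.
        -- kill.
        -- inversion H3.
      * inversion H2; subst.
        -- apply j_v.
        -- inversion H3; subst. inversion H4. inversion H4.
        -- apply j_k.
      * inversion H2.
    + apply t_1; auto. eapply DA_red1; eauto.
Qed.

Lemma Tc_red {X} (y : X) (t t' : term X) : red t t' -> Tc y t -> Tc y t'.
Proof. induction 1; eauto using Tc_red1. Qed.

Lemma Om_notw_step {X} (A B : term X) : Om A -> exists t', red1 (App A B) t'.
Proof.
  intros HA. destruct HA.
  - eexists. unfold omega_t. apply red1_S.
  - eexists. apply red1_appL. unfold i_t. apply red1_S.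
  - eexists. apply red1_appL. apply red1_K.
Qed.

Lemma Tc_not_normal {X} (y : X) (t : term X) : Tc y t -> ~ normal t.
Proof.
  intros Ht Hn. destruct Ht as [|J Q HJ HQ].
  - eapply Hn. apply red1_S.
  - destruct HQ as [W|q Hb].
    + eapply Hn. apply red1_appR. unfold d_t. apply red1_S.
    + destruct Hb as [A B HA HB]. destruct (Om_notw_step A B HA) as [t' Ht'].
      eapply Hn. apply red1_appR. exact Ht'.
Qed.

Fixpoint subst {X} (s : X -> term X) (t : term X) : term X :=
  match t with
  | Var x => s x
  | App a b => App (subst s a) (subst s b)
  | Sc _ => Sc X
  | Kc _ => Kc X
  end.

Lemma red1_subst {X} (s : X -> term X) (t t' : term X) : red1 t t' -> red1 (subst s t) (subst s t').
Proof. induction 1; simpl; [apply red1_S|apply red1_K|apply red1_appL; auto|apply red1_appR; auto]. Qed.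

Lemma red_subst {X} (s : X -> term X) (t t' : term X) : red t t' -> red (subst s t) (subst s t').
Proof. induction 1; [apply rt_step; apply red1_subst; auto|apply rt_refl|eapply rt_trans; eauto]. Qed.

Lemma subst_id {X} (s : X -> term X) (t : term X) : (forall v, occurs v t -> s v = Var v) -> subst s t = t.
Proof. induction t; simpl; intros H; auto. f_equal; auto. Qed.

Lemma fresh_bound {X} (f : nat -> X) (Hf : forall m n, f m = f n -> m = n) (t : term X) :
  exists N, forall m, N <= m -> ~ occurs (f m) t.
Proof.
  induction t as [y| | |a IHa b IHb].
  - destruct (classic (exists m, f m = y)) as [[m0 E]|NE].
    + exists (S m0). intros m Hm Hoc. simpl in Hoc. subst. apply Hf in Hoc. lia.
    + exists 0. intros m _ Hoc. apply NE. exists m. exact Hoc.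
  - exists 0. simpl. auto.
  - exists 0. simpl. auto.
  - destruct IHa as [N1 H1]. destruct IHb as [N2 H2]. exists (N1 + N2).
    intros m Hm [H|H]; [apply (H1 m)| apply (H2 m)]; auto; lia.
Qed.

Definition sig3 {X} (x0 y0 w : X) (a b c : term X) (v : X) : term X :=
  if excluded_middle_informative (v = x0) then a
  else if excluded_middle_informative (v = y0) then b
  else if excluded_middle_informative (v = w) then c else Var v.

Ltac dem := repeat match goal with |- context [excluded_middle_informative ?P] =>
  destruct (excluded_middle_informative P) end; congruence.

Definition sid X := App (App (Sc X) (i_t X)) (d_t X).
Definition ta X := App (App (Sc X) (App (Kc X) (App (Sc X) (i_t X)))) (App (Kc X) (d_t X)).
Definition tb X := App (Kc X) (App (Kc X) (i_t X)).

Lemma inN'_of_L {X} (n : term X) k : step n = None ->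
  (forall x : X, step (iter k (App n (Var x))) = None) -> inN' n.
Proof.
  intros H1 H2. left. split; [apply step_none_normal; auto|].
  intros x _. exists (iter k (App n (Var x))).
  split; [apply step_none_normal; auto|].
  split; [apply step_none_normal; reflexivity|].
  split; [apply red_iter|apply step_none_normal; auto].
Qed.

Lemma inN'_normal {X} (n : term X) : inN' n -> normal n.
Proof. intros [[H _]| ->]; [exact H| apply step_none_normal; reflexivity]. Qed.

Lemma appN'_red {X} (m n r : term X) : appN' m n r -> red (App m n) r /\ normal r /\ inN' r.
Proof. intros [_ [_ [[_ [_ [R N]]] H]]]. auto. Qed.

Lemma appN'_intro {X} (m n r : term X) : inN' m -> inN' n -> inN' r -> red (App m n) r -> normal r -> appN' m n r.
Proof.
  intros Hm Hn Hr R N. split; [auto|split; [auto|split; [|auto]]].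
  split; [apply inN'_normal; auto|split; [apply inN'_normal; auto| split; auto]].
Qed.

Theorem proposition5p3 (X : Type) (HX : infinite_type X) :
  ~ exists t u : term X, is_pca (@inN' X) (@appN' X) t u.
Proof.
  intros [t [u P]]. destruct P as [Hop [Hfun [HS [HK Hax]]]].
  destruct HX as [f Hf].
  destruct (fresh_bound f Hf t) as [N HN].
  set (x0 := f N). set (y0 := f (S N)). set (w := f (S (S N))).
  assert (Dxy : x0 <> y0) by (intro E; apply Hf in E; lia).
  assert (Dxw : x0 <> w) by (intro E; apply Hf in E; lia).
  assert (Dyw : y0 <> w) by (intro E; apply Hf in E; lia).
  assert (Vin : forall v : X, inN' (Var v)).
  { intro v. apply (inN'_of_L _ 0); reflexivity. }
  assert (P2 : forall v1 v2 : X, inN' (App (Var v1) (Var v2))).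
  { intros. apply (inN'_of_L _ 0); reflexivity. }
  assert (P3 : forall v1 v2 v3 : X, inN' (App (App (Var v1) (Var v2)) (App (Var v3) (Var v2)))).
  { intros. apply (inN'_of_L _ 0); reflexivity. }
  assert (R1 : red (App (App (App t (Var x0)) (Var y0)) (Var w))
                   (App (App (Var x0) (Var w)) (App (Var y0) (Var w)))).
  { destruct (Hax _ _ _ (Vin x0) (Vin y0) (Vin w)) as [_ [Hiff _]].
    destruct (proj2 (Hiff (App (App (Var x0) (Var w)) (App (Var y0) (Var w)))))
      as [sx [sxy [H1 [H2 H3]]]].
    { exists (App (Var x0) (Var w)), (App (Var y0) (Var w)).
      split; [|split]; (apply appN'_intro; auto; [apply rt_refl| apply step_none_normal; reflexivity]). }
    apply appN'_red in H1. apply appN'_red in H2. apply appN'_red in H3.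
    eapply rt_trans; [apply red_appL; eapply rt_trans; [apply red_appL; apply H1| apply H2]| apply H3]. }
  pose proof (red_subst (sig3 x0 y0 w (ta X) (tb X) (Kc X)) _ _ R1) as R2.
  cbn [subst] in R2.
  assert (Ex : sig3 x0 y0 w (ta X) (tb X) (Kc X) x0 = ta X) by (unfold sig3; dem).
  assert (Ey : sig3 x0 y0 w (ta X) (tb X) (Kc X) y0 = tb X) by (unfold sig3; dem).
  assert (Ew : sig3 x0 y0 w (ta X) (tb X) (Kc X) w = Kc X) by (unfold sig3; dem).
  assert (Et : subst (sig3 x0 y0 w (ta X) (tb X) (Kc X)) t = t).
  { apply subst_id. intros v Hv. unfold sig3.
    assert (v <> x0) by (intro E; subst; apply (HN N); auto).
    assert (v <> y0) by (intro E; subst; apply (HN (S N)); auto).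
    assert (v <> w) by (intro E; subst; apply (HN (S (S N))); auto).
    dem. }
  rewrite Ex, Ey, Ew, Et in R2.
  assert (R3 : red (App (App (ta X) (Kc X)) (App (tb X) (Kc X))) (i_t X)).
  { apply (red_by 100). reflexivity. }
  assert (Ni : normal (i_t X)) by (apply step_none_normal; reflexivity).
  assert (Iin : inN' (i_t X)) by (apply (inN'_of_L _ 10); reflexivity).
  assert (Ain : inN' (ta X)) by (apply (inN'_of_L _ 10); reflexivity).
  assert (Bin : inN' (tb X)) by (apply (inN'_of_L _ 10); reflexivity).
  assert (Kin : inN' (Kc X)) by (apply (inN'_of_L _ 0); reflexivity).
  destruct (Hax _ _ _ Ain Bin Kin) as [[sx [sxy [H1 H2]]] [Hiff _]].
  assert (Rs : red (App (App (App t (ta X)) (tb X)) (Kc X)) (App sxy (Kc X))).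
  { apply red_appL. eapply rt_trans; [apply red_appL; apply (appN'_red _ _ _ H1)|apply (appN'_red _ _ _ H2)]. }
  assert (Rt : red (App (App (App t (ta X)) (tb X)) (Kc X)) (i_t X)) by (exact (rt_trans _ _ _ _ _ R2 R3)).
  assert (Rsi : red (App sxy (Kc X)) (i_t X)) by (exact (red_to_nf _ _ _ Rt Ni Rs)).
  destruct (proj1 (Hiff (i_t X))) as [xz [yz [A _]]].
  { exists sx, sxy. split; [auto|split; [auto|]].
    apply appN'_intro; auto. apply (Hop _ _ _ H2). }
  apply appN'_red in A. destruct A as [RA [NA IA]].
  assert (Rsid : red (App (ta X) (Kc X)) (sid X)) by (apply (red_by 100); reflexivity).
  assert (Nsid : normal (sid X)) by (apply step_none_normal; reflexivity).
  assert (xz = sid X) by (eapply nf_unique; eauto). subst xz.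
  destruct IA as [[_ HL]|E].
  - destruct (HL (f 0)) as [r [_ [_ [Rr Nr]]]].
    { unfold sid, i_t, d_t, omega_t, i_t. simpl. tauto. }
    apply (Tc_not_normal (f 0) r); auto.
    eapply Tc_red; [exact Rr|]. apply t_0.
  - unfold sid, d_t in E. inversion E.
Qed.
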